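(* Let $A$ be a seminormal cancellative monoid. Then the conductor ideal $I$ of the inclusion $A\hookrightarrow A_{\mathrm{nor}}$ is a radical ideal of both $A$ and $A_{\mathrm{nor}}$.
   Context: A monoid is a pointed commutative monoid; cancellative means $ac=bc$ with $c\ne0$ implies $a=b$; seminormal means reduced ($a^2=b^2,a^3=b^3\Rightarrow a=b$) and whenever $x^3=y^2$ there is $z$ with $x=z^2,y=z^3$. For cancellative $A$, $A^+$ is the group completion of $A\setminus\{0\}$ with a basepoint adjoined, and $A_{\mathrm{nor}}=\{\alpha\in A^+:\alpha^n\in A\text{ for some }n\ge1\}$. The conductor ideal of $A\subset A_{\mathrm{nor}}$ is $I=\{a\in A: A_{\mathrm{nor}}\cdot a\subseteq A\}$ (an ideal of both $A$ and $A_{\mathrm{nor}}$). An ideal $I$ of a monoid $B$ is radical if $b^n\in I$ for some $n\ge1$ implies $b\in I$. *)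

(* Defs.v *)
Record PMonoid := {
  carrier :> Type;
  mmul : carrier -> carrier -> carrier;
  mone : carrier;
  mzero : carrier;
  mmul_assoc : forall a b c, mmul a (mmul b c) = mmul (mmul a b) c;
  mmul_comm : forall a b, mmul a b = mmul b a;
  mmul_1l : forall a, mmul mone a = a;
  mmul_0l : forall a, mmul mzero a = mzero
}.

Arguments mmul {p} _ _.
Arguments mone {p}.
Arguments mzero {p}.

Fixpoint mpow {A : PMonoid} (a : A) (n : nat) : A :=
  match n with
  | O => mone
  | S n' => mmul a (mpow a n')
  end.

Definition cancellative (A : PMonoid) : Prop :=
  forall a b c : A, c <> mzero -> mmul a c = mmul b c -> a = b.

Definition reduced (A : PMonoid) : Prop :=
  forall a b : A, mpow a 2 = mpow b 2 -> mpow a 3 = mpow b 3 -> a = b.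

Definition seminormal (A : PMonoid) : Prop :=
  reduced A /\
  forall x y : A, mpow x 3 = mpow y 2 ->
    exists z : A, x = mpow z 2 /\ y = mpow z 3.

(** Group completion A^+ of a cancellative A.  A non-basepoint element of
    A^+ is a fraction p/q with p, q nonzero elements of A, and
    p/q = p'/q'  iff  p q' = p' q (valid since A is cancellative).
    All predicates below are stated on representatives (p, q); they are
    invariant under this equivalence.  The basepoint of A^+ is 0 = 0/1. *)

Definition frac_in_A {A : PMonoid} (p q : A) : Prop :=
  exists c : A, p = mmul q c.

Definition frac_in_Anor {A : PMonoid} (p q : A) : Prop :=
  exists n : nat, 1 <= n /\ frac_in_A (mpow p n) (mpow q n).

(** Conductor ideal I = { a in A : A_nor * a subseteq A }.
    (The basepoint of A_nor gives 0 * a = 0 in A, so only nonzero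
    fractions need to be checked.) *)
Definition conductor {A : PMonoid} (a : A) : Prop :=
  forall p q : A, p <> mzero -> q <> mzero -> frac_in_Anor p q ->
    frac_in_A (mmul p a) q.

Definition frac_in_I {A : PMonoid} (p q : A) : Prop :=
  exists a : A, conductor a /\ p = mmul q a.

Definition conductor_ideal_of_A (A : PMonoid) : Prop :=
  forall a b : A, conductor a -> conductor (mmul b a).

Definition conductor_radical_in_A (A : PMonoid) : Prop :=
  forall (a : A) (n : nat), 1 <= n -> conductor (mpow a n) -> conductor a.

Definition conductor_ideal_of_Anor (A : PMonoid) : Prop :=
  forall p q a : A, p <> mzero -> q <> mzero -> frac_in_Anor p q ->
    conductor a -> frac_in_I (mmul p a) q.

(** I is a radical ideal of A_nor: for alpha = p/q in A_nor,
    alpha^n in I with n >= 1 implies alpha in I.  (The basepoint case is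
    trivial since 0 in I.) *)
Definition conductor_radical_in_Anor (A : PMonoid) : Prop :=
  forall (p q : A) (n : nat), p <> mzero -> q <> mzero -> frac_in_Anor p q ->
    1 <= n -> frac_in_I (mpow p n) (mpow q n) -> frac_in_I p q.

(* Main.v *)
Require Import Defs.
From Stdlib Require Import Arith Lia.

Lemma mul_1r (A : PMonoid) (a : A) : mmul a mone = a.
Proof. rewrite mmul_comm; apply mmul_1l. Qed.

Lemma mul_0r (A : PMonoid) (a : A) : mmul a mzero = mzero.
Proof. rewrite mmul_comm; apply mmul_0l. Qed.

Lemma swap (A : PMonoid) (a b c : A) : mmul a (mmul b c) = mmul b (mmul a c).
Proof. rewrite !mmul_assoc, (mmul_comm A a b). reflexivity. Qed.

Lemma mpow_add (A : PMonoid) (a : A) n m : mpow a (n + m) = mmul (mpow a n) (mpow a m).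
Proof. induction n; simpl. now rewrite mmul_1l. now rewrite IHn, mmul_assoc. Qed.

Lemma mpow_mulb (A : PMonoid) (a b : A) n : mpow (mmul a b) n = mmul (mpow a n) (mpow b n).
Proof.
  induction n; simpl. now rewrite mmul_1l.
  rewrite IHn, !mmul_assoc. f_equal. rewrite <- !mmul_assoc. f_equal. apply mmul_comm.
Qed.

Lemma mpow_mult (A : PMonoid) (a : A) n m : mpow a (m * n) = mpow (mpow a n) m.
Proof. induction m; simpl. reflexivity. now rewrite mpow_add, IHm. Qed.

Lemma mpow_comm (A : PMonoid) (a : A) n m : mpow (mpow a n) m = mpow (mpow a m) n.
Proof. rewrite <- !mpow_mult. now rewrite Nat.mul_comm. Qed.

Lemma mul_nz (A : PMonoid) (a b : A) : cancellative A -> a <> mzero -> b <> mzero -> mmul a b <> mzero.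
Proof.
  intros C Ha Hb E. apply Ha. apply (C a mzero b Hb). now rewrite mmul_0l.
Qed.

Lemma pow_nz (A : PMonoid) (a : A) n : cancellative A -> a <> mzero -> mpow a n <> mzero.
Proof.
  intros C Ha. induction n; simpl.
  - intro E. apply Ha. now rewrite <- (mmul_1l A a), E, mmul_0l.
  - now apply mul_nz.
Qed.

Lemma anor_pow (A : PMonoid) (p q : A) k : frac_in_Anor p q -> frac_in_Anor (mpow p k) (mpow q k).
Proof.
  intros [N [HN [c Hc]]]. exists N. split; [exact HN|].
  exists (mpow c k). rewrite !(mpow_comm A _ k N), Hc. apply mpow_mulb.
Qed.

Lemma step (A : PMonoid) (p q : A) m : cancellative A -> seminormal A -> q <> mzero ->
  2 <= m -> (forall k, m <= k -> frac_in_A (mpow p k) (mpow q k)) ->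
  forall k, m - 1 <= k -> frac_in_A (mpow p k) (mpow q k).
Proof.
  intros C [R S] Hq Hm H k Hk.
  destruct (Nat.eq_dec k (m-1)) as [->|Hne]; [|apply H; lia].
  set (j := m - 1).
  set (P := mpow p j). set (Q := mpow q j).
  destruct (H (2*j) ltac:(lia)) as [x Hx].
  destruct (H (3*j) ltac:(lia)) as [y Hy].
  rewrite !mpow_mult in Hx, Hy. fold P Q in Hx, Hy.
  assert (E : mpow x 3 = mpow y 2).
  { apply (C _ _ (mpow Q 6)). { apply pow_nz; auto. apply pow_nz; auto. }
    rewrite mmul_comm, (mmul_comm _ (mpow y 2)).
    change 6 with (3*2) at 1. change 6 with (2*3).
    rewrite !mpow_mult, <- !mpow_mulb, <- Hx, <- Hy, <- !mpow_mult.
    reflexivity. }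
  destruct (S x y E) as [z [Hz1 Hz2]].
  exists z. apply R.
  - rewrite mpow_mulb, <- Hz1. exact Hx.
  - rewrite mpow_mulb, <- Hz2. exact Hy.
Qed.

Lemma keyL (A : PMonoid) (p q : A) m : cancellative A -> seminormal A -> q <> mzero ->
  (forall k, m <= k -> frac_in_A (mpow p k) (mpow q k)) ->
  forall k, 1 <= k -> frac_in_A (mpow p k) (mpow q k).
Proof.
  intros C SN Hq. induction m as [|m IH]; intros H k Hk.
  - apply H; lia.
  - destruct m as [|m'].
    + apply H; lia.
    + apply IH; [|exact Hk]. intros k' Hk'.
      apply (step A p q (S (S m')) C SN Hq ltac:(lia) H). lia.
Qed.

Lemma keyL1 (A : PMonoid) (p q : A) m : cancellative A -> seminormal A -> q <> mzero ->
  (forall k, m <= k -> frac_in_A (mpow p k) (mpow q k)) -> frac_in_A p q.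
Proof.
  intros C SN Hq H. destruct (keyL A p q m C SN Hq H 1 (le_n 1)) as [c Hc].
  exists c. simpl in Hc. rewrite !mul_1r in Hc. exact Hc.
Qed.

Lemma rad_A (A : PMonoid) : cancellative A -> seminormal A -> conductor_radical_in_A A.
Proof.
  intros C SN a n Hn Ha p q Hp Hq Hpq.
  apply (keyL1 A _ _ n C SN Hq). intros k Hk.
  destruct (Ha (mpow p k) (mpow q k) (pow_nz A p k C Hp) (pow_nz A q k C Hq)
             (anor_pow A p q k Hpq)) as [c Hc].
  exists (mmul c (mpow a (k - n))).
  assert (Ek : mpow a k = mmul (mpow a n) (mpow a (k - n))).
  { rewrite <- mpow_add. f_equal. lia. }
  rewrite mpow_mulb, Ek, mmul_assoc, Hc, mmul_assoc. reflexivity.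
Qed.

Theorem lemma1p19 (A : PMonoid) :
  cancellative A -> seminormal A ->
  (conductor_ideal_of_A A /\ conductor_radical_in_A A) /\
  (conductor_ideal_of_Anor A /\ conductor_radical_in_Anor A).
Proof.
  intros C SN. split; split.
  - intros a b Ha p q Hp Hq Hpq. destruct (Ha p q Hp Hq Hpq) as [c Hc].
    exists (mmul b c). rewrite swap, Hc, swap. reflexivity.
  - now apply rad_A.
  - intros p q a Hp Hq Hpq Ha. destruct (Ha p q Hp Hq Hpq) as [c Hc].
    exists c. split; [|exact Hc].
    intros p' q' Hp' Hq' Hpq'.
    assert (Hprod : frac_in_Anor (mmul p p') (mmul q q')).
    { destruct Hpq as [n [Hn [c1 H1]]]. destruct Hpq' as [m [Hm [c2 H2]]].
      exists (n * m). split; [lia|].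
      exists (mmul (mpow c1 m) (mpow c2 n)).
      rewrite !mpow_mulb.
      rewrite (Nat.mul_comm n m) at 1. rewrite (mpow_mult A p n m), H1.
      rewrite (mpow_mult A p' m n), H2.
      rewrite (Nat.mul_comm n m), (mpow_mult A q n m), (Nat.mul_comm m n), (mpow_mult A q' m n).
      rewrite !mpow_mulb.
      rewrite <- !mmul_assoc. f_equal. apply swap. }
    destruct (Ha _ _ (mul_nz A p p' C Hp Hp') (mul_nz A q q' C Hq Hq') Hprod) as [e He].
    exists e. apply (C _ _ q Hq).
    transitivity (mmul p' (mmul q c)).
    { rewrite (mmul_comm _ q c). symmetry. apply mmul_assoc. }
    rewrite <- Hc, mmul_assoc, (mmul_comm _ p' p), He.
    rewrite <- mmul_assoc, (mmul_comm _ q (mmul q' e)). idtac.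
    reflexivity.
  - intros p q n Hp Hq Hpq Hn [a [Ha Hpa]].
    assert (Hb : frac_in_A p q).
    { apply (keyL1 A _ _ n C SN Hq). intros k Hk.
      destruct (Ha (mpow p (k - n)) (mpow q (k - n)) (pow_nz A p _ C Hp)
                 (pow_nz A q _ C Hq) (anor_pow A p q _ Hpq)) as [c Hc].
      exists c. replace k with (n + (k - n)) by lia.
      rewrite !mpow_add, Hpa, <- mmul_assoc, (mmul_comm _ a), Hc, mmul_assoc. reflexivity. }
    destruct Hb as [b Hb]. exists b. split; [|exact Hb].
    apply (rad_A A C SN b n Hn).
    assert (E : a = mpow b n).
    { apply (C _ _ (mpow q n) (pow_nz A q n C Hq)).
      rewrite mmul_comm, <- Hpa, Hb, mpow_mulb. apply mmul_comm. }
    now rewrite <- E.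
Qed.
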